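(* Consider the two-dimensional Poisson regression model with interaction on the design region $\mathcal{X}=[0,\infty)^2$ with parameter vector $\boldsymbol{\beta}=(\beta_0,\beta_1,\beta_2,\beta_{12})^\top$, where $\beta_0\in\mathbb{R}$ is arbitrary, $\beta_1,\beta_2<0$ and $\beta_{12}=0$. Then the design which assigns equal weights $1/4$ to the four settings $\mathbf{x}_0=(0,0)$, $\mathbf{x}_1=(2/|\beta_1|,0)$, $\mathbf{x}_2=(0,2/|\beta_2|)$ and $\mathbf{x}_3=(2/|\beta_1|,2/|\beta_2|)$ is locally $D$-optimal at $\boldsymbol{\beta}$ on $\mathcal{X}$.
   Context: In the two-dimensional Poisson regression model with interaction, an observation $Y$ at setting $\mathbf{x}=(x_1,x_2)$ is Poisson distributed with mean $\lambda(\mathbf{x})=\exp(\mathbf{f}(\mathbf{x})^\top\boldsymbol{\beta})$, where $\mathbf{f}(\mathbf{x})=(1,x_1,x_2,x_1x_2)^\top$ and $\boldsymbol{\beta}=(\beta_0,\beta_1,\beta_2,\beta_{12})^\top$. An (approximate) design $\xi$ on $\mathcal{X}$ is a finite collection of mutually distinct settings $\mathbf{x}_0,\dots,\mathbf{x}_{n-1}\in\mathcal{X}$ with weights $w_i\ge 0$, $\sum_i w_i=1$. Its information matrix is $\mathbf{M}_{\boldsymbol{\beta}}(\xi)=\sum_{i=0}^{n-1} w_i\lambda(\mathbf{x}_i)\mathbf{f}(\mathbf{x}_i)\mathbf{f}(\mathbf{x}_i)^\top$. A design $\xi^*$ is locally $D$-optimal at $\boldsymbol{\beta}$ on $\mathcal{X}$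 if it maximizes $\det\mathbf{M}_{\boldsymbol{\beta}}(\xi)$ over all designs $\xi$ on $\mathcal{X}$. *)

(* Defs.v *)
From HB Require Import structures.
From mathcomp Require Import all_boot all_order all_algebra.
From mathcomp Require Import all_classical all_reals all_analysis.
Set Implicit Arguments. Unset Strict Implicit. Unset Printing Implicit Defensive.
Import Order.TTheory GRing.Theory Num.Theory.
Local Open Scope ring_scope.

Section Poisson.
Variable R : realType.

Definition fvec (x : R * R) : 'cV[R]_4 :=
  \col_(i < 4) [:: 1; x.1; x.2; x.1 * x.2]`_i.

Definition beta_vec (b0 b1 b2 b12 : R) : 'cV[R]_4 :=
  \col_(i < 4) [:: b0; b1; b2; b12]`_i.

Definition lam (b : 'cV[R]_4) (x : R * R) : R :=
  expR (((fvec x)^T *m b) 0 0).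

Definition infoM (b : 'cV[R]_4) (n : nat) (x : 'I_n -> R * R) (w : 'I_n -> R)
  : 'M[R]_4 :=
  \sum_(i < n) (w i * lam b (x i)) *: (fvec (x i) *m (fvec (x i))^T).

Definition is_design (X : R * R -> Prop) (n : nat) (x : 'I_n -> R * R)
  (w : 'I_n -> R) : Prop :=
  injective x /\ (forall i, X (x i)) /\ (forall i, 0 <= w i) /\
  \sum_(i < n) w i = 1.

Definition locally_D_optimal (X : R * R -> Prop) (b : 'cV[R]_4) (n : nat)
  (x : 'I_n -> R * R) (w : 'I_n -> R) : Prop :=
  is_design X x w /\
  forall (m : nat) (y : 'I_m -> R * R) (v : 'I_m -> R),
    is_design X y v -> \det (infoM b y v) <= \det (infoM b x w).

Definition quadrant (x : R * R) : Prop := 0 <= x.1 /\ 0 <= x.2.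

End Poisson.

(* Main.v *)
Require Import Defs.
From HB Require Import structures.
From mathcomp Require Import all_boot all_order all_algebra.
From mathcomp Require Import all_classical all_reals all_analysis.
From mathcomp Require Import ring lra.
Import Order.TTheory GRing.Theory Num.Theory.
Set Implicit Arguments. Unset Strict Implicit. Unset Printing Implicit Defensive.
Local Open Scope ring_scope.

Section Had.
Variable R : realFieldType.

Definition gram n m (c : 'I_m -> R) (u : 'I_m -> 'cV[R]_n) : 'M[R]_n :=
  \sum_(i < m) c i *: (u i *m (u i)^T).

Lemma gramE n m (c : 'I_m -> R) (u : 'I_m -> 'cV[R]_n) j k :
  gram c u j k = \sum_(i < m) c i * (u i j 0 * u i k 0).
Proof.
rewrite /gram summxE; apply: eq_bigr => i _.
by rewrite mxE mxE big_ord1 !mxE.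
Qed.

Lemma gram_mul n m (c : 'I_m -> R) (u : 'I_m -> 'cV[R]_n) (E : 'M[R]_n) :
  E *m gram c u *m E^T = gram c (fun i => E *m u i).
Proof.
rewrite /gram mulmx_sumr mulmx_suml; apply: eq_bigr => i _.
by rewrite -scalemxAr -scalemxAl trmx_mul !mulmxA.
Qed.

Lemma row'_gram n m (c : 'I_m -> R) (u : 'I_m -> 'cV[R]_n.+1) :
  row' ord0 (col' ord0 (gram c u)) = gram c (fun i => row' ord0 (u i)).
Proof.
apply/matrixP => j k; rewrite [LHS]mxE [LHS]mxE !gramE.
by apply: eq_bigr => i _; rewrite !mxE.
Qed.

Lemma hadamard n m (c : 'I_m -> R) (u : 'I_m -> 'cV[R]_n) :
  (forall i, 0 <= c i) -> \det (gram c u) <= \prod_(j < n) gram c u j j.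
Proof.
move=> c0; elim: n u => [|n IH] u; first by rewrite det_mx00 big_ord0.
have Gsym : forall j k, gram c u j k = gram c u k j.
  by move=> j k; rewrite !gramE; apply: eq_bigr => i _; rewrite [u i j 0 * _]mulrC.
have Gdiag : forall n' (u' : 'I_m -> 'cV[R]_n') j, 0 <= gram c u' j j.
  move=> n' u' j; rewrite gramE; apply: sumr_ge0 => i _.
  by apply: mulr_ge0 => //; rewrite -expr2 sqr_ge0.
have prod0 : 0 <= \prod_(j < n.+1) gram c u j j by apply: prodr_ge0 => j _.
have [a0|apos] : gram c u ord0 ord0 = 0 \/ 0 < gram c u ord0 ord0.
  by have := Gdiag _ u ord0; rewrite le0r => /orP[/eqP->|->]; [left|right].
- have h : forall i, c i * u i ord0 0 = 0.
    move=> i; move: a0; rewrite gramE => a0.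
    have := psumr_eq0P (fun i _ => mulr_ge0 (c0 i) (ltac:(rewrite -expr2; exact: sqr_ge0) : 0 <= u i ord0 0 * u i ord0 0)) a0 (i:=i) isT.
    by move/eqP; rewrite !mulf_eq0 orbb => /orP[]/eqP->; rewrite ?mul0r ?mulr0.
  rewrite (expand_det_row _ ord0) big1 // => j _.
  rewrite gramE big1 ?mul0r // => i _.
  by rewrite mulrA h mul0r.
- set a := gram c u ord0 ord0.
  set r := fun j : 'I_n.+1 => gram c u j ord0 / a.
  set R0 := \matrix_(j, k) (if (k == ord0) && (j != ord0) then r j else 0) : 'M[R]_n.+1.
  set E := 1%:M - R0.
  have detE : \det E = 1.
    rewrite det_trig.
      rewrite big1 // => i _; rewrite !mxE eqxx.
      by case: (i == ord0); rewrite /= subr0.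
    apply/forallP => j; apply/forallP => k; apply/implyP => jk.
    rewrite !mxE.
    have -> : (j == k) = false by apply/negbTE; rewrite neq_ltn jk.
    have -> : (k == ord0) = false.
      by apply/negbTE; rewrite -val_eqE /= -lt0n; apply: leq_ltn_trans jk.
    by rewrite /= subr0.
  set v := fun i => E *m u i.
  have v0 : forall i, v i ord0 0 = u i ord0 0.
    move=> i; rewrite /v mulmxBl mul1mx !mxE big1 ?subr0 // => k _.
    by rewrite mxE /= andbF mul0r.
  have vl : forall i j, v i (lift ord0 j) 0 =
      u i (lift ord0 j) 0 - r (lift ord0 j) * u i ord0 0.
    move=> i j; rewrite /v mulmxBl mul1mx !mxE big_ord_recl mxE eqxx /=.
    rewrite big1 ?addr0 // => k _.
    by rewrite mxE /= mul0r.
  have detG : \det (gram c u) = \det (gram c v).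
    by rewrite -gram_mul !det_mulmx det_tr detE mul1r mulr1.
  have G'00 : gram c v ord0 ord0 = a.
    by rewrite /a !gramE; apply: eq_bigr => i _; rewrite v0.
  have G'0l : forall j, gram c v ord0 (lift ord0 j) = 0.
    move=> j; rewrite gramE.
    have -> : \sum_(i < m) c i * (v i ord0 0 * v i (lift ord0 j) 0) =
       gram c u ord0 (lift ord0 j) - r (lift ord0 j) * a.
      rewrite /a !gramE mulr_sumr -sumrB; apply: eq_bigr => i _.
      rewrite v0 vl; ring.
    rewrite /r Gsym divfK //; first by rewrite subrr.
    by rewrite gt_eqF.
  have G'll : forall j, gram c v (lift ord0 j) (lift ord0 j) <=
                        gram c u (lift ord0 j) (lift ord0 j).
    move=> j.
    have -> : gram c v (lift ord0 j) (lift ord0 j) =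
       gram c u (lift ord0 j) (lift ord0 j)
       - (gram c u (lift ord0 j) ord0) ^+ 2 / a.
      have e : gram c v (lift ord0 j) (lift ord0 j) =
       gram c u (lift ord0 j) (lift ord0 j)
       - 2 * r (lift ord0 j) * gram c u (lift ord0 j) ord0
       + r (lift ord0 j) ^+ 2 * a.
        rewrite /a !gramE mulr_sumr mulr_sumr -sumrB -big_split /=.
        apply: eq_bigr => i _; rewrite !vl; ring.
      rewrite e /r; field; by rewrite gt_eqF.
    rewrite lerBlDr lerDl; apply: divr_ge0; [exact: sqr_ge0 | exact: ltW].
  rewrite detG (expand_det_row _ ord0) [X in X <= _]big_ord_recl big1 ?addr0; last first.
    by move=> j _; rewrite G'0l mul0r.
  rewrite G'00 big_ord_recl -/a; apply: ler_wpM2l; first exact: ltW.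
  rewrite /cofactor /= expr0 mul1r row'_gram.
  apply: le_trans (IH _) _.
  apply: ler_prod => j _; apply/andP; split; first exact: Gdiag.
  rewrite -row'_gram mxE mxE; exact: G'll.
Qed.

End Had.

Section Main.
Variable R : realType.

Lemma expR_pow (x : R) n : - (n.+1)%:R <= x -> (1 + x / (n.+1)%:R) ^+ n.+1 <= expR x.
Proof.
move=> hx.
have hN : (n.+1)%:R != 0 :> R by rewrite pnatr_eq0.
have -> : expR x = expR (x / (n.+1)%:R) ^+ n.+1 by rewrite -expRM_natr divfK.
have hp : 0 < (n.+1)%:R :> R by rewrite ltr0n.
apply: lerXn2r; rewrite ?nnegrE ?expR_ge0 ?expR_ge1Dx //.
rewrite -(ler_pM2r hp) mul0r mulrDl mul1r divfK //.
lra.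
Qed.

Lemma expR_pow4 (x : R) : -4 <= x -> (1 + x / 4) ^+ 4 <= expR x.
Proof. move=> h; exact: (@expR_pow x 3). Qed.

Lemma E_lo : 25/4 <= expR (1:R) ^+ 2.
Proof.
have h := @expR_pow 1 7 (ltac:(rewrite lerNl; apply: le_trans (ler0n _ _); lra)).
have h1 : 5/2 <= expR (1:R).
  apply: le_trans h; rewrite [_ / _]mulrC.
  have -> : (7.+1)%:R = 8 :> R by [].
  nra.
have h0 : 0 <= 5/2 :> R by lra.
nra.
Qed.

Lemma E_hi : expR (1:R) ^+ 2 <= 16.
Proof.
have h := @expR_pow (-1) 1 (ltac:(lra)).
have hE : expR (-1) * expR (1:R) = 1 by rewrite -expRD addNr expR0.
have Ep : 0 < expR (1:R) := expR_gt0 _.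
have : expR (1:R) <= 4.
  have h' : 1/4 <= expR (-1:R) by apply: le_trans h; have -> : (1.+1)%:R = 2 :> R by []; lra.
  nra.
move=> h4; nra.
Qed.

Lemma phi_le (s : R) : 0 <= s -> (2 - s) ^+ 2 + expR 1 ^+ 2 * s ^+ 2 <= 4 * expR s.
Proof.
move=> s0.
have lo := E_lo; have hi := E_hi.
set E2 := expR (1:R) ^+ 2 in lo hi *.
have [sl|sh] := lerP s (1/2).
  have h := @expR_pow4 s (ltac:(lra)).
  have h2 : 1 + s + 3/8 * s^+2 <= expR s.
    apply: le_trans h; nra.
  nra.
set u := s - 2.
have hu : -(3/2) <= u by rewrite /u; lra.
have -> : expR s = E2 * expR u.
  by rewrite /E2 /u expr2 -!expRD; congr expR; lra.
have h := @expR_pow4 u (ltac:(lra)).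
have hq : 41/256 <= 1/2 + u/4 + u^+2/64 by nra.
have E2p : 0 <= E2 by lra.
have key : 0 <= u^+2 * (E2 * (1/2 + u/4 + u^+2/64) - 1).
  apply: mulr_ge0; first exact: sqr_ge0.
  nra.
have hs : s = u + 2 by rewrite /u; lra.
rewrite hs.
apply: le_trans (_ : 4 * (E2 * (1 + u / 4) ^+ 4) <= _); last first.
  by apply: ler_wpM2l; [lra | apply: ler_wpM2l].
have -> : (2 - (u + 2)) ^+ 2 + E2 * (u + 2) ^+ 2 =
   4 * (E2 * (1 + u / 4) ^+ 4) - u^+2 * (E2 * (1/2 + u/4 + u^+2/64) - 1) by field.
lra.
Qed.


Definition pp (E s t : R) : 'cV[R]_4 :=
  \col_(i < 4) [:: (2-s)*(2-t); (2-s)*(E*t); (E*s)*(2-t); (E*s)*(E*t)]`_i.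
Definition Kmat (E b1 b2 : R) : 'M[R]_4 :=
  \matrix_(i < 4, j < 4) (nth [::] [:: [:: 4; 2*b1; 2*b2; b1*b2];
     [:: 0; 0; -(2*E*b2); -(E*b1*b2)]; [:: 0; -(2*E*b1); 0; -(E*b1*b2)];
     [:: 0; 0; 0; E^+2*b1*b2]] i)`_j.

Lemma Kf E b1 b2 (x : R * R) : Kmat E b1 b2 *m fvec x = pp E (-(b1*x.1)) (-(b2*x.2)).
Proof.
apply/matrixP => i j; rewrite (ord1 j) !mxE !big_ord_recl big_ord0 !mxE.
by case: i => [[|[|[|[|i]]]] Hi] //=; ring.
Qed.

Lemma lamE b0 b1 b2 (x : R * R) :
  lam (beta_vec b0 b1 b2 0) x = expR b0 * expR (b1 * x.1) * expR (b2 * x.2).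
Proof.
rewrite /lam !mxE !big_ord_recl big_ord0 !mxE /=.
have -> : 1 * b0 + (x.1 * b1 + (x.2 * b2 + (x.1 * x.2 * 0 + 0))) =
  b0 + b1 * x.1 + b2 * x.2 by ring.
by rewrite !expRD.
Qed.


Lemma amgm4 (a b c d : R) : 0 <= a -> 0 <= b -> 0 <= c -> 0 <= d ->
  a * b * c * d <= ((a + b + c + d) / 4) ^+ 4.
Proof.
move=> a0 b0 c0 d0.
set p := (a + b) / 2; set q := (c + d) / 2.
have h1 : a * b <= p ^+ 2 by rewrite /p; have := sqr_ge0 (a - b); nra.
have h2 : c * d <= q ^+ 2 by rewrite /q; have := sqr_ge0 (c - d); nra.
have p0 : 0 <= p by rewrite /p; lra.
have q0 : 0 <= q by rewrite /q; lra.
have h3 : p * q <= ((p + q) / 2) ^+ 2 by have := sqr_ge0 (p - q); nra.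
have -> : (a + b + c + d) / 4 = (p + q) / 2 by rewrite /p /q; field.
have h4 : a * b * (c * d) <= p ^+ 2 * q ^+ 2.
  apply: ler_pM => //; [exact: mulr_ge0 | exact: mulr_ge0].
have h5 : p ^+ 2 * q ^+ 2 <= ((p + q) / 2) ^+ 4.
  have -> : p ^+ 2 * q ^+ 2 = (p * q) ^+ 2 by ring.
  have -> : ((p + q) / 2) ^+ 4 = (((p + q) / 2) ^+ 2) ^+ 2 by rewrite -exprM.
  apply: lerXn2r => //; rewrite nnegrE; [exact: mulr_ge0 | exact: sqr_ge0].
rewrite -mulrA; exact: le_trans h4 h5.
Qed.

Lemma ptbound (b0 p q : R) : p <= 0 -> q <= 0 ->
  expR b0 * expR p * expR q *
  \sum_(j < 4) (pp (expR 1) (-p) (-q) j 0 * pp (expR 1) (-p) (-q) j 0)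
  <= 16 * expR b0.
Proof.
move=> hp hq.
have A : forall r : R, r <= 0 ->
   0 <= expR r * ((2 - - r) ^+ 2 + expR 1 ^+ 2 * (- r) ^+ 2) <= 4.
  move=> r hr; apply/andP; split.
    apply: mulr_ge0; first exact: expR_ge0.
    by apply: addr_ge0; [exact: sqr_ge0 | apply: mulr_ge0; exact: sqr_ge0].
  have := phi_le (ltac:(lra) : 0 <= - r).
  move=> h; have e1 : expR r * expR (- r) = 1 by rewrite -expRD subrr expR0.
  have er : 0 < expR r := expR_gt0 _.
  apply: le_trans (ler_wpM2l (ltW er) h) _.
  by rewrite mulrCA e1 mulr1.
set S := \sum_(j < 4) _.
have -> : S =
   ((2 - - p) ^+ 2 + expR 1 ^+ 2 * (- p) ^+ 2) * ((2 - - q) ^+ 2 + expR 1 ^+ 2 * (- q) ^+ 2).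
  by rewrite /S !big_ord_recl big_ord0 !mxE /=; ring.
have /andP[Ap1 Ap2] := A p hp; have /andP[Aq1 Aq2] := A q hq.
have eb : 0 < expR b0 := expR_gt0 _.
set X := expR p * _ in Ap1 Ap2; set Y := expR q * _ in Aq1 Aq2.
have -> : expR b0 * expR p * expR q *
  (((2 - - p) ^+ 2 + expR 1 ^+ 2 * (- p) ^+ 2) * ((2 - - q) ^+ 2 + expR 1 ^+ 2 * (- q) ^+ 2))
  = expR b0 * (X * Y) by rewrite /X /Y; ring.
rewrite mulrC; apply: ler_wpM2r; first exact: ltW.
nra.
Qed.


Lemma gen_bound (b0 b1 b2 : R) (hb1 : b1 < 0) (hb2 : b2 < 0) m
  (y : 'I_m -> R * R) (v : 'I_m -> R) : is_design (@quadrant R) y v ->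
  \det (Kmat (expR 1) b1 b2) ^+ 2 * \det (infoM (beta_vec b0 b1 b2 0) y v)
  <= (4 * expR b0) ^+ 4.
Proof.
case=> _ [yq [v0 v1]].
set K := Kmat _ _ _; set b := beta_vec _ _ _ _.
set c := fun i => v i * lam b (y i).
set u := fun i => K *m fvec (y i).
have c0 : forall i, 0 <= c i.
  by move=> i; apply: mulr_ge0 => //; rewrite /lam expR_ge0.
have eqM : infoM b y v = gram c (fun i => fvec (y i)) by [].
have detE : \det (K *m infoM b y v *m K^T) = \det K ^+ 2 * \det (infoM b y v).
  by rewrite !det_mulmx det_tr expr2; ring.
rewrite -detE eqM gram_mul.
apply: le_trans (hadamard _ c0) _.
set d := fun j => gram c u j j.
have d0 : forall j, 0 <= d j.
  move=> j; rewrite /d gramE; apply: sumr_ge0 => i _.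
  by apply: mulr_ge0 => //; rewrite -expr2 sqr_ge0.
have sumd : \sum_(j < 4) d j <= 16 * expR b0.
  rewrite /d.
  under eq_bigr do rewrite gramE.
  rewrite exchange_big /=.
  apply: le_trans (_ : \sum_(i < m) v i * (16 * expR b0) <= _); last first.
    by rewrite -mulr_suml v1 mul1r.
  apply: ler_sum => i _.
  rewrite -mulr_sumr /c -mulrA; apply: ler_wpM2l; first exact: v0.
  rewrite /u Kf lamE.
  have [q1 q2] := yq i.
  have hp : b1 * (y i).1 <= 0 by nra.
  have hq : b2 * (y i).2 <= 0 by nra.
  exact (ptbound b0 hp hq).
have P : \prod_(j < 4) d j <= ((\sum_(j < 4) d j) / 4) ^+ 4.
  rewrite !big_ord_recl !big_ord0 mulr1 addr0 !mulrA !addrA.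
  by apply: amgm4.
apply: le_trans P _.
apply: lerXn2r.
- by rewrite nnegrE; apply: divr_ge0 => //; apply: sumr_ge0 => j _.
- by rewrite nnegrE; apply: mulr_ge0 => //; exact: expR_ge0.
- rewrite ler_pdivrMr //; apply: le_trans sumd _; lra.
Qed.


Lemma opt_val (b0 b1 b2 : R) (hb1 : b1 < 0) (hb2 : b2 < 0) :
  \det (Kmat (expR 1) b1 b2) ^+ 2 *
  \det (infoM (beta_vec b0 b1 b2 0)
    (fun i : 'I_4 => [:: (0, 0); (2 / `|b1|, 0); (0, 2 / `|b2|);
                        (2 / `|b1|, 2 / `|b2|)]`_i)
    (fun _ : 'I_4 => 1 / 4)) = (4 * expR b0) ^+ 4.
Proof.
set K := Kmat _ _ _; set b := beta_vec _ _ _ _.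
set x0 := fun i : 'I_4 => _.
set c := fun i => 1 / 4 * lam b (x0 i).
have eqM : infoM b x0 (fun _ : 'I_4 => 1 / 4) = gram c (fun i => fvec (x0 i)) by [].
have detE : \det (K *m infoM b x0 (fun _ : 'I_4 => 1 / 4) *m K^T) =
   \det K ^+ 2 * \det (infoM b x0 (fun _ : 'I_4 => 1 / 4)).
  by rewrite !det_mulmx det_tr expr2; ring.
rewrite -detE eqM gram_mul.
have e1 : b1 * (2 / `|b1|) = -2.
  by rewrite ltr0_norm //; field; rewrite lt_eqF.
have e2 : b2 * (2 / `|b2|) = -2.
  by rewrite ltr0_norm //; field; rewrite lt_eqF.
have E0 : expR (1:R) != 0 by rewrite gt_eqF // expR_gt0.
have em2 : expR (-2) = (expR (1:R) ^+ 2)^-1.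
  by rewrite expRN expr2 -expRD.
have -> : gram c (fun i => K *m fvec (x0 i)) = (4 * expR b0)%:M.
  apply/matrixP => j k; rewrite gramE !big_ord_recl big_ord0 /c /=.
  rewrite !Kf !lamE /= !mulr0 !oppr0 e1 e2 !opprK !expR0 em2 !mxE.
  case: j => [[|[|[|[|j]]]] Hj] //; case: k => [[|[|[|[|k]]]] Hk] //=;
    rewrite -?val_eqE /= ?mulr1n ?mulr0n; field; rewrite ?expf_neq0 ?E0 //.
by rewrite det_scalar.
Qed.

End Main.

Theorem theorem1 (R : realType) (b0 b1 b2 : R) (hb1 : b1 < 0) (hb2 : b2 < 0) :
  locally_D_optimal (@quadrant R) (beta_vec b0 b1 b2 0)
    (fun i : 'I_4 => [:: (0, 0); (2 / `|b1|, 0); (0, 2 / `|b2|);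
                        (2 / `|b1|, 2 / `|b2|)]`_i)
    (fun _ : 'I_4 => 1 / 4).
Proof.
have p1 : 0 < 2 / `|b1| by rewrite divr_gt0 // normr_gt0 lt_eqF.
have p2 : 0 < 2 / `|b2| by rewrite divr_gt0 // normr_gt0 lt_eqF.
have n1 : (2 / `|b1| == 0) = false by rewrite gt_eqF.
have n2 : (2 / `|b2| == 0) = false by rewrite gt_eqF.
split.
  split.
  { move=> i j; case: i => [[|[|[|[|i]]]] Hi] //; case: j => [[|[|[|[|j]]]] Hj] //=;
      try (by move=> _; apply: val_inj).
    all: by move=> h; have ha := congr1 fst h; have hb := congr1 snd h;
      simpl in ha, hb; exfalso; lra. }
  split.
  { move=> i; case: i => [[|[|[|[|i]]]] Hi] //=; rewrite /quadrant /=;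
      split; rewrite ?lexx ?ltW //. }
  split; first by move=> _; lra.
  by rewrite !big_ord_recl big_ord0; field.
move=> m y v Hd.
have h1 := gen_bound b0 hb1 hb2 Hd.
have h2 := opt_val b0 hb1 hb2.
set K2 := \det (Kmat (expR 1) b1 b2) ^+ 2 in h1 h2.
have K2pos : 0 < K2.
  rewrite lt0r sqr_ge0 andbT; apply/eqP => K0.
  move: h2; rewrite K0 mul0r => /esym/eqP; apply/negP.
  by rewrite expf_neq0 // mulf_neq0 // gt_eqF // expR_gt0.
rewrite -(ler_pM2l K2pos) h2; exact: h1.
Qed.
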